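(* Let $a>0$, $g>0$, $l_{\mathrm{c}}>0$, $c_{\infty}>0$ and $c_{\mathrm{s}}\ge 0$ be constants. Consider pairs $(l_{\infty},c)$ with $l_{\infty}>0$ and $c$ continuously differentiable on $[0,l_{\infty})$ with left limit $c^-:=\lim_{x\nearrow l_{\infty}}c(x)$, satisfying \[ -a c'(x)-g c(x)=0\ (0<x<l_{\infty}),\qquad a c^-=g l_{\mathrm{c}} c_{\infty},\qquad c(0)=c_{\mathrm{s}} \] (steady-state solutions). Such a pair exists if and only if $c_{\mathrm{s}}>c_{\infty} g l_{\mathrm{c}}/a$, and in that case it is unique and given by \[ c(x)=c_{\mathrm{s}}\mathrm{e}^{-gx/a},\qquad l_{\infty}=\frac{a}{g}\log\frac{a c_{\mathrm{s}}}{g l_{\mathrm{c}} c_{\infty}}. \]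
   Context: This is the steady-state problem of a one-dimensional axonal growth model with no diffusion ($D=0$), in which the tubulin concentration along the axon is not required to be continuous at the axon tip $x=l_{\infty}$ (the growth cone concentration is $c_{\infty}$, while $c^-$ is the concentration just inside the axon). Here $a$ is the active transport velocity, $g$ the degradation rate, $l_{\mathrm{c}}$ the characteristic growth-cone length, $c_{\mathrm{s}}$ the soma concentration, and $l_{\infty}$ the axon length. *)

(* Defs.v *)
From Stdlib Require Import Reals.
From Coquelicot Require Import Coquelicot.
Open Scope R_scope.

Definition C1_on_0l (l : R) (c : R -> R) : Prop :=
  exists dc : R -> R,
    (forall x, 0 < x < l -> is_derive c x (dc x)) /\
    filterlim (fun h => (c h - c 0) / h) (at_right 0) (locally (dc 0)) /\
    (forall x, 0 < x < l -> continuous dc x) /\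
    filterlim dc (at_right 0) (locally (dc 0)).

(* Steady-state solution (l_inf, c) of the D = 0 model with possibly
   discontinuous tip concentration. *)
Definition steady_state (a g lc cinf cs : R) (l : R) (c : R -> R) : Prop :=
  0 < l /\
  C1_on_0l l c /\
  (exists cm : R,
      filterlim c (at_left l) (locally cm) /\
      a * cm = g * lc * cinf) /\
  (forall x, 0 < x < l -> - a * Derive c x - g * c x = 0) /\
  c 0 = cs.

(* Main.v *)
Require Import Defs.
From Stdlib Require Import Reals Lra.
From Coquelicot Require Import Coquelicot.
Open Scope R_scope.

Lemma lim_mult F {FF : Filter F} (f g : R -> R) (x y : R) :
  filterlim f F (locally x) -> filterlim g F (locally y) ->
  filterlim (fun t => f t * g t) F (locally (x * y)).
Proof.
  intros Hf Hg. eapply (filterlim_comp_2 f g Rmult Hf Hg).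
  exact (@filterlim_mult R_AbsRing x y).
Qed.

Lemma lim_plus F {FF : Filter F} (f g : R -> R) (x y : R) :
  filterlim f F (locally x) -> filterlim g F (locally y) ->
  filterlim (fun t => f t + g t) F (locally (x + y)).
Proof.
  intros Hf Hg. eapply (filterlim_comp_2 f g Rplus Hf Hg).
  exact (@filterlim_plus R_AbsRing R_NormedModule x y).
Qed.

Lemma cont_right (f : R -> R) x : continuous f x ->
  filterlim f (at_right x) (locally (f x)).
Proof. intros H. eapply filterlim_filter_le_1. apply filter_le_within. exact H. Qed.

Lemma cont_left (f : R -> R) x : continuous f x ->
  filterlim f (at_left x) (locally (f x)).
Proof. intros H. eapply filterlim_filter_le_1. apply filter_le_within. exact H. Qed.

Lemma uniq_right (f : R -> R) x y z :
  filterlim f (at_right z) (locally x) -> filterlim f (at_right z) (locally y) -> x = y.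
Proof.
  intros H1 H2. exact (@filterlim_locally_unique R R_AbsRing R_NormedModule (at_right z)
   (Proper_StrongProper _ (at_right_proper_filter z)) f x y H1 H2).
Qed.

Lemma uniq_left (f : R -> R) x y z :
  filterlim f (at_left z) (locally x) -> filterlim f (at_left z) (locally y) -> x = y.
Proof.
  intros H1 H2. exact (@filterlim_locally_unique R R_AbsRing R_NormedModule (at_left z)
   (Proper_StrongProper _ (at_left_proper_filter z)) f x y H1 H2).
Qed.

Lemma rc0 (c : R -> R) d :
  filterlim (fun h => (c h - c 0) / h) (at_right 0) (locally d) ->
  filterlim c (at_right 0) (locally (c 0)).
Proof.
  intros H.
  apply filterlim_ext_loc with (fun h => c 0 + h * ((c h - c 0) / h)).
  - exists (mkposreal 1 Rlt_0_1). intros y _ Hy. field. lra.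
  - assert (HK : filterlim (fun h => c 0 + h * ((c h - c 0) / h)) (at_right 0) (locally (c 0 + 0 * d))).
    { apply lim_plus; try typeclasses eauto. apply filterlim_const.
      apply lim_mult; try typeclasses eauto; try exact H.
      apply (cont_right (fun t => t)). apply continuous_id. }
    rewrite Rmult_0_l, Rplus_0_r in HK. exact HK.
Qed.

Lemma ball0 (eps : posreal) (y : R) : ball 0 eps y -> y < eps.
Proof.
  intros H. change (Rabs (y - 0) < eps) in H. apply Rabs_def2 in H. lra.
Qed.

Lemma exp_cont (g a z : R) : continuous (fun t => exp (g * t / a)) z.
Proof. apply (@ex_derive_continuous R_AbsRing R_NormedModule). auto_derive. trivial. Qed.

Lemma sol_form a g l (c dc : R -> R) : 0 < a ->
  (forall x, 0 < x < l -> is_derive c x (dc x)) ->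
  filterlim c (at_right 0) (locally (c 0)) ->
  (forall x, 0 < x < l -> - a * Derive c x - g * c x = 0) ->
  forall x, 0 < x < l -> c x = c 0 * exp (- g * x / a).
Proof.
  intros ha Hd Hc Hode x Hx.
  set (h := fun y => c y * exp (g * y / a)).
  set (dh := fun z => dc z * exp (g * z / a) + c z * (exp (g * z / a) * (g / a))).
  assert (Hdh : forall z, 0 < z < l -> is_derive h z (dh z)).
  { intros z Hz. unfold h, dh. apply (is_derive_mult c (fun t => exp (g * t / a))).
    - apply Hd; exact Hz.
    - auto_derive. trivial. unfold Rdiv. ring.
    - intros; apply Rmult_comm. }
  assert (Hdh0 : forall z, 0 < z < l -> dh z = 0).
  { intros z Hz. unfold dh.
    assert (E : dc z = - g * c z / a).
    { rewrite <- (is_derive_unique c z (dc z)) by (apply Hd; exact Hz).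
      specialize (Hode z Hz).
      replace (Derive c z) with ((a * Derive c z) / a) by (field; lra).
      replace (a * Derive c z) with (- g * c z) by lra. reflexivity. }
    rewrite E. field. lra. }
  assert (Hconst : forall y, 0 < y < x -> h y = h x).
  { intros y Hy.
    destruct (MVT_gen h y x dh) as [z [Hz E]].
    - rewrite Rmin_left, Rmax_right by lra. intros z Hz. apply Hdh. lra.
    - rewrite Rmin_left, Rmax_right by lra. intros z Hz.
      apply continuity_pt_filterlim. apply (@ex_derive_continuous R_AbsRing R_NormedModule).
      exists (dh z). apply Hdh. lra.
    - revert Hz E. rewrite Rmin_left, Rmax_right by lra. intros Hz E.
      rewrite Hdh0 in E by lra. lra. }
  assert (L1 : filterlim h (at_right 0) (locally (c 0 * exp (g * 0 / a)))).
  { apply lim_mult; try typeclasses eauto. exact Hc.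
    apply (cont_right (fun t => exp (g * t / a))). apply exp_cont. }
  assert (L2 : filterlim h (at_right 0) (locally (h x))).
  { apply filterlim_ext_loc with (fun _ => h x).
    - exists (mkposreal x (proj1 Hx)). intros y Hb Hy.
      apply ball0 in Hb. simpl in Hb. symmetry. apply Hconst. lra.
    - apply filterlim_const; typeclasses eauto. }
  pose proof (uniq_right h _ _ 0 L1 L2) as U.
  unfold h in U.
  replace (g * 0 / a) with 0 in U by (field; lra). rewrite exp_0 in U.
  replace (c x) with (c x * exp (g * x / a) * exp (- g * x / a)).
  - rewrite <- U. ring.
  - rewrite Rmult_assoc, <- exp_plus.
    replace (g * x / a + - g * x / a) with 0 by (field; lra). rewrite exp_0. ring.
Qed.

Lemma necess (a g lc cinf cs : R)
  (ha : 0 < a) (hg : 0 < g) (hlc : 0 < lc) (hcinf : 0 < cinf) (hcs : 0 <= cs)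
  l c : steady_state a g lc cinf cs l c ->
  cs > cinf * g * lc / a /\
  l = a / g * ln (a * cs / (g * lc * cinf)) /\
  (forall x, 0 <= x < l -> c x = cs * exp (- g * x / a)).
Proof.
  intros [Hl [[dc [Hd [Hq _]]] [[cm [Hcm Hcm']] [Hode H0]]]].
  pose proof (rc0 c (dc 0) Hq) as Hc.
  assert (F : forall x, 0 <= x < l -> c x = cs * exp (- g * x / a)).
  { intros x [[Hx|Hx] Hx2].
    - rewrite <- H0. apply (sol_form a g l c dc); auto.
    - subst x. replace (- g * 0 / a) with 0 by (field; lra). rewrite exp_0. lra. }
  assert (Ecm : cm = cs * exp (- g * l / a)).
  { assert (L : filterlim c (at_left l) (locally (cs * exp (- g * l / a)))).
    { apply filterlim_ext_loc with (fun y => cs * exp (- g * y / a)).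
      - exists (mkposreal l Hl). intros y Hb Hy.
        change (Rabs (y - l) < l) in Hb. apply Rabs_def2 in Hb. simpl in Hb.
        symmetry. apply F. lra.
      - apply (cont_left (fun y => cs * exp (- g * y / a))).
        apply (@ex_derive_continuous R_AbsRing R_NormedModule). auto_derive. trivial. }
    exact (uniq_left c _ _ l Hcm L). }
  set (E := exp (- g * l / a)) in *.
  assert (HE0 : 0 < E) by apply exp_pos.
  assert (HE1 : E < 1).
  { rewrite <- exp_0. apply exp_increasing.
    assert (0 < g * l / a) by (apply Rdiv_lt_0_compat; [apply Rmult_lt_0_compat|]; lra).
    replace (- g * l / a) with (- (g * l / a)) by (field; lra). lra. }
  rewrite Ecm in Hcm'.
  assert (Hglc : 0 < g * lc * cinf) by (apply Rmult_lt_0_compat; [apply Rmult_lt_0_compat|]; lra).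
  assert (Hacs : 0 < a * cs).
  { destruct (Rle_lt_or_eq_dec 0 cs hcs) as [h|h]. apply Rmult_lt_0_compat; lra.
    assert (a * (cs * E) = 0) by (rewrite <- h; ring). lra. }
  assert (Hlt : g * lc * cinf < a * cs).
  { rewrite <- Hcm'. replace (a * (cs * E)) with (a * cs * E) by ring.
    rewrite <- (Rmult_1_r (a * cs)) at 2. apply Rmult_lt_compat_l; lra. }
  split; [|split; [|exact F]].
  - apply Rlt_gt. apply Rmult_lt_reg_l with a; [lra|].
    replace (a * (cinf * g * lc / a)) with (g * lc * cinf) by (field; lra). exact Hlt.
  - replace (a * cs / (g * lc * cinf)) with (/ E).
    + rewrite ln_Rinv by exact HE0. unfold E. rewrite ln_exp. field; repeat split; lra.
    + assert (0 < cs) by nra. rewrite <- Hcm'. field; repeat split; lra.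
Qed.

Lemma quot_lim (f : R -> R) d : is_derive f 0 d ->
  filterlim (fun h => (f h - f 0) / h) (at_right 0) (locally d).
Proof.
  intros H. apply is_derive_Reals in H.
  apply (filterlim_locally (F := at_right 0)).
  intros eps. destruct (H eps (cond_pos eps)) as [del Hdel].
  exists del. intros y Hb Hy.
  change (Rabs (y - 0) < del) in Hb. rewrite Rminus_0_r in Hb.
  specialize (Hdel y ltac:(lra) Hb). rewrite Rplus_0_l in Hdel.
  exact Hdel.
Qed.

Lemma exist_sol (a g lc cinf cs : R)
  (ha : 0 < a) (hg : 0 < g) (hlc : 0 < lc) (hcinf : 0 < cinf) (hcs : 0 <= cs) :
  cs > cinf * g * lc / a ->
  steady_state a g lc cinf cs (a / g * ln (a * cs / (g * lc * cinf)))
     (fun x => cs * exp (- g * x / a)).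
Proof.
  intros Hgt.
  assert (Hglc : 0 < g * lc * cinf) by (apply Rmult_lt_0_compat; [apply Rmult_lt_0_compat|]; lra).
  assert (Hlt : g * lc * cinf < a * cs).
  { apply Rmult_lt_compat_l with (r := a) in Hgt; [|lra].
    replace (a * (cinf * g * lc / a)) with (g * lc * cinf) in Hgt by (field; lra). lra. }
  assert (Harg : 1 < a * cs / (g * lc * cinf)).
  { apply Rmult_lt_reg_l with (g * lc * cinf); [lra|].
    replace (g * lc * cinf * (a * cs / (g * lc * cinf))) with (a * cs) by (field; lra). lra. }
  set (dc := fun x => cs * (exp (- g * x / a) * (- g / a))).
  assert (HD : forall x, is_derive (fun x => cs * exp (- g * x / a)) x (dc x)).
  { intros x. unfold dc. auto_derive. trivial. unfold Rdiv. ring. }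
  split; [|split; [|split; [|split]]].
  - apply Rmult_lt_0_compat. apply Rdiv_lt_0_compat; lra.
    rewrite <- ln_1. apply ln_increasing; lra.
  - exists dc. split; [|split; [|split]].
    + intros; apply HD.
    + apply quot_lim. apply HD.
    + intros x _. apply (@ex_derive_continuous R_AbsRing R_NormedModule). unfold dc. auto_derive. trivial.
    + apply (cont_right dc). apply (@ex_derive_continuous R_AbsRing R_NormedModule). unfold dc. auto_derive. trivial.
  - set (l := a / g * ln (a * cs / (g * lc * cinf))).
    exists (cs * exp (- g * l / a)). split.
    + apply (cont_left (fun y => cs * exp (- g * y / a))).
      apply (@ex_derive_continuous R_AbsRing R_NormedModule). auto_derive. trivial.
    + replace (- g * l / a) with (- ln (a * cs / (g * lc * cinf))) by (unfold l; field; split; lra).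
      rewrite exp_Ropp, exp_ln by lra. assert (0 < cs) by nra. field. repeat split; lra.
  - intros x _. erewrite is_derive_unique; [| apply HD]. unfold dc. field. lra.
  - simpl. replace (- g * 0 / a) with 0 by (field; lra). rewrite exp_0. ring.
Qed.

Theorem theorem4 (a g lc cinf cs : R)
  (ha : 0 < a) (hg : 0 < g) (hlc : 0 < lc) (hcinf : 0 < cinf) (hcs : 0 <= cs) :
  ((exists (l : R) (c : R -> R), steady_state a g lc cinf cs l c) <->
     cs > cinf * g * lc / a) /\
  (cs > cinf * g * lc / a ->
     forall (l : R) (c : R -> R), steady_state a g lc cinf cs l c ->
       l = a / g * ln (a * cs / (g * lc * cinf)) /\
       (forall x, 0 <= x < l -> c x = cs * exp (- g * x / a))).
Proof.
  split; [split|].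
  - intros [l [c H]]. exact (proj1 (necess a g lc cinf cs ha hg hlc hcinf hcs l c H)).
  - intros H. eexists; eexists. apply exist_sol; assumption.
  - intros _ l c H. exact (proj2 (necess a g lc cinf cs ha hg hlc hcinf hcs l c H)).
Qed.
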